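(* Let $G$ be a graph of order $n$, diameter $d$ and with a resolving set of size $k$. If $K_t$ is not a minor of $G$, then $n\leq (dk+1)^{d(t-1)}+1$. If $G$ has rankwidth at most $r$, then $n\leq (dk+1)^{d(3\cdot 2^r+2)}+1$.
   Context: A set $R$ of vertices of a graph $G$ is a resolving set if for each pair $u,v$ of distinct vertices there is $x\in R$ with $d(x,u)\neq d(x,v)$. Minors and rankwidth are the standard notions. *)

(* Defs.v *)
From mathcomp Require Import all_boot all_order all_algebra.
Set Implicit Arguments. Unset Strict Implicit. Unset Printing Implicit Defensive.
Import GRing.Theory.

Section Graphs.
Variable T : finType.
Variable e : rel T.

Definition ball (x : T) (n : nat) : {set T} :=
  iter n (fun S => S :|: [set y | [exists z in S, e z y]]) [set x].

(* graph distance; in a connected graph it is < #|T|; it equals #|T| when y is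
   unreachable from x (irrelevant: we only use it on connected graphs) *)
Definition dist (x y : T) : nat := find (fun n => y \in ball x n) (iota 0 #|T|).

Definition graph_connected : Prop := forall x y : T, connect e x y.

Definition has_diameter (d : nat) : Prop :=
  graph_connected /\ (forall x y, dist x y <= d) /\ (exists x y, dist x y = d).

Definition resolving (R : {set T}) : Prop :=
  forall u v : T, u != v -> exists2 x, x \in R & dist x u != dist x v.

Definition connected_in (S : {set T}) : Prop :=
  forall x y, x \in S -> y \in S ->
    connect (fun a b => [&& e a b, a \in S & b \in S]) x y.

Definition has_clique_minor (t : nat) : Prop :=
  exists B : 'I_t -> {set T},
    [/\ forall i, B i != set0,
        forall i, connected_in (B i),
        forall i j, i != j -> [disjoint B i & B j] &
        forall i j, i != j -> exists x y, [/\ x \in B i, y \in B j & e x y]].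

(* cut-rank of X: rank over GF(2) of the X x (V \ X) adjacency submatrix
   (written as a #|T| x #|T| matrix with zeroes outside X x (V\X)) *)
Definition cutrank (X : {set T}) : nat :=
  \rank (\matrix_(i < #|T|, j < #|T|)
          (if [&& enum_val i \in X, enum_val j \notin X & e (enum_val i) (enum_val j)]
           then 1%R else 0%R : 'F_2))%R.

(* a rank decomposition of width <= r: a subcubic tree (V, f) whose leaves are in
   bijection (via L) with the vertices of G, such that for every tree edge uv the
   cut-rank of the set of graph vertices whose leaf lies on u's side of uv is <= r *)
Definition rank_decomposition_le (r : nat) : Prop :=
  exists (V : finType) (f : rel V) (L : T -> V),
    [/\ symmetric f /\ irreflexive f,
        (forall a b, connect f a b) /\
          #|[set p : V * V | f p.1 p.2]| = 2 * (#|V| - 1),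
        (forall v, #|[set w | f v w]| <= 3),
        injective L /\ (forall v, (#|[set w | f v w]| == 1) = (v \in codom L)) &
        (forall u v, f u v ->
           cutrank [set x | connect (fun a b => f a b &&
                        ~~ (((a == u) && (b == v)) || ((a == v) && (b == u)))) u (L x)]
           <= r)].

(* rankwidth <= r; graphs with at most one vertex have rankwidth 0 *)
Definition rankwidth_le (r : nat) : Prop :=
  #|T| <= 1 \/ rank_decomposition_le r.

End Graphs.

(* Main.v *)
Require Import Defs.
From mathcomp Require Import all_boot all_order all_algebra zify.
Set Implicit Arguments. Unset Strict Implicit. Unset Printing Implicit Defensive.


Section Dist.
Variable T : finType.
Variable e : rel T.

Lemma ball0 x : ball e x 0 = [set x].
Proof. by []. Qed.

Lemma ballS x n : ball e x n.+1 = ball e x n :|: [set y | [exists z in ball e x n, e z y]].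
Proof. by []. Qed.

Lemma ball_step x n y z : y \in ball e x n -> e y z -> z \in ball e x n.+1.
Proof. by move=> Hy Hyz; rewrite ballS in_setU in_set; apply/orP; right; apply/existsP; exists y; rewrite Hy. Qed.

Lemma ball_mono x n : ball e x n \subset ball e x n.+1.
Proof. by rewrite ballS subsetUl. Qed.

Lemma ball_sub x n m : n <= m -> ball e x n \subset ball e x m.
Proof.
elim: m => [|m IH]; first by rewrite leqn0 => /eqP ->.
rewrite leq_eqVlt => /orP [/eqP -> //| H]. exact: subset_trans (IH H) (ball_mono _ _).
Qed.

Lemma ballSP x n y : y \in ball e x n.+1 ->
  y \in ball e x n \/ exists2 z, z \in ball e x n & e z y.
Proof.
rewrite ballS in_setU in_set => /orP [H|/existsP [z /andP [H1 H2]]]; first by left.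
by right; exists z.
Qed.

Lemma dist_le x y n : y \in ball e x n -> dist e x y <= n.
Proof.
move=> Hy; rewrite /dist.
case: (ltnP n #|T|) => Hn.
  rewrite leqNgt; apply/negP => Hlt.
  have := before_find 0 Hlt. by rewrite nth_iota // add0n Hy.
apply: leq_trans (find_size _ _) _. by rewrite size_iota.
Qed.

Lemma path_ball x p : path e x p -> last x p \in ball e x (size p).
Proof.
elim/last_ind: p => [|p z IH]; first by move=> _; rewrite ball0 set11.
rewrite rcons_path last_rcons size_rcons => /andP [Hp Hz].
exact: ball_step (IH Hp) Hz.
Qed.

Lemma ball_connect x n y : y \in ball e x n -> connect e x y.
Proof.
elim: n y => [|n IH] y; first by rewrite ball0 in_set1 => /eqP ->.
case/ballSP => [/IH //| [z /IH Hz Hzy]].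
exact: connect_trans Hz (connect1 Hzy).
Qed.

Lemma dist_ball x y : connect e x y -> y \in ball e x (dist e x y).
Proof.
case/connectP => p Hp ->.
case: (shortenP Hp) => p' Hp' Hu _.
have Hs : size p' < #|T|.
  have := max_card (mem (x :: p')). by rewrite (card_uniqP Hu).
have Hb := path_ball Hp'.
have Hhas : has (fun n => last x p' \in ball e x n) (iota 0 #|T|).
  apply/hasP; exists (size p') => //. by rewrite mem_iota.
have := nth_find 0 Hhas. rewrite -/(dist e x (last x p)).
rewrite has_find in Hhas. rewrite nth_iota; last by rewrite size_iota in Hhas.
rewrite add0n.
by [].
Qed.

Lemma ball_trans x y z a b : y \in ball e x a -> z \in ball e y b -> z \in ball e x (a + b).
Proof.
move=> Hy; elim: b z => [|b IH] z; first by rewrite ball0 in_set1 addn0 => /eqP ->.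
case/ballSP => [Hz | [w Hw Hwz]].
  by rewrite addnS; apply: (subsetP (ball_mono _ _)); apply: IH.
by rewrite addnS; apply: ball_step (IH _ Hw) Hwz.
Qed.

Lemma ball_edge x y : e x y -> y \in ball e x 1.
Proof. by move=> H; apply: ball_step H; rewrite ball0 set11. Qed.

Hypothesis e_sym : symmetric e.

Lemma ball_sym x y n : y \in ball e x n -> x \in ball e y n.
Proof.
elim: n y => [|n IH] y; first by rewrite !ball0 !in_set1 eq_sym.
case/ballSP => [Hy | [z Hz Hzy]].
  by apply: (subsetP (ball_mono _ _)); apply: IH.
have H1 : z \in ball e y 1 by apply: ball_edge; rewrite e_sym.
by rewrite -add1n; apply: ball_trans H1 (IH _ Hz).
Qed.

Hypothesis conn : forall x y, connect e x y.

Lemma dist_sym x y : dist e x y = dist e y x.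
Proof.
apply/eqP; rewrite eqn_leq; apply/andP; split; apply: dist_le; apply: ball_sym; exact: dist_ball.
Qed.

Lemma dist_tri x y z : dist e x z <= dist e x y + dist e y z.
Proof. by apply: dist_le; apply: ball_trans; apply: dist_ball. Qed.

Lemma dist_xx x : dist e x x = 0.
Proof. by apply/eqP; rewrite -leqn0; apply: dist_le; rewrite ball0 set11. Qed.

Lemma dist0 x y : dist e x y = 0 -> x = y.
Proof. by move=> H; have := dist_ball (conn x y); rewrite H ball0 in_set1 => /eqP ->. Qed.

Lemma dist_edge x y : e x y -> dist e x y <= 1.
Proof. by move=> H; apply: dist_le; apply: ball_edge. Qed.

Lemma dist_pred x y n : dist e x y = n.+1 -> exists2 p, e p y & dist e x p = n.
Proof.
move=> H; have := dist_ball (conn x y); rewrite H.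
case/ballSP => [Hy | [z Hz Hzy]].
  by have := dist_le Hy; rewrite H ltnn.
exists z => //; apply/eqP; rewrite eqn_leq (dist_le Hz) /=.
rewrite leqNgt; apply/negP => Hlt.
have := dist_le (ball_step (dist_ball (conn x z)) Hzy); rewrite H ltnS leqNgt Hlt //.
Qed.

Lemma dist_succ x y : x != y -> exists2 w, e x w & (dist e w y).+1 = dist e x y.
Proof.
move=> Hxy; rewrite dist_sym; case Hd: (dist e y x) => [|n].
  by move/dist0: Hd => Hd; rewrite Hd eqxx in Hxy.
case: (dist_pred Hd) => p Hp Hn; exists p; first by rewrite e_sym.
by rewrite dist_sym Hn.
Qed.

End Dist.


Section Sauer.
Variable T : finType.

Definition shatters (F : {set {set T}}) (S : {set T}) : bool :=
  [forall Q : {set T}, (Q \subset S) ==> [exists A in F, A :&: S == Q]].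

Lemma shattersP (F : {set {set T}}) (S : {set T}) : reflect (forall Q : {set T}, Q \subset S -> exists2 A, A \in F & A :&: S = Q)
  (shatters F S).
Proof.
apply: (iffP forallP) => [H Q HQ | H Q].
  have := H Q; rewrite HQ /= => /existsP [A /andP [HA /eqP HAQ]]; by exists A.
apply/implyP => HQ; case: (H Q HQ) => A HA HAQ; apply/existsP; exists A; by rewrite HA HAQ eqxx.
Qed.

Lemma expn_mono m n k : m <= n -> m ^ k <= n ^ k.
Proof. by move=> H; elim: k => [|k IH] //; rewrite !expnS leq_mul. Qed.

Lemma sauer0 (R : {set T}) (F : {set {set T}}) :
  (forall A, A \in F -> A \subset R) ->
  (forall S : {set T}, S \subset R -> #|S| = 1 -> ~~ shatters F S) -> #|F| <= 1.
Proof.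
move=> HF HS; apply/card_le1_eqP => B A HB HA.
apply/setP => y; apply/idP/idP => Hy; apply/negPn/negP => Hn.
- have HyR : y \in R by apply: (subsetP (HF _ HA)).
  have := HS [set y]; rewrite sub1set HyR cards1 => /(_ isT erefl) /negP H0; apply: H0.
  apply/shattersP => Q; rewrite subset1 => /orP [/eqP -> | /eqP ->].
    exists A => //; apply/setP => z; rewrite !inE; case: (z =P y) => [->|]; by rewrite ?Hy ?andbF.
  exists B => //; apply/setP => z; rewrite !inE; case: (z =P y) => [->|]; by rewrite ?(negbTE Hn) ?andbF.
- have HyR : y \in R by apply: (subsetP (HF _ HB)).
  have := HS [set y]; rewrite sub1set HyR cards1 => /(_ isT erefl) /negP H0; apply: H0.
  apply/shattersP => Q; rewrite subset1 => /orP [/eqP -> | /eqP ->].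
    exists B => //; apply/setP => z; rewrite !inE; case: (z =P y) => [->|]; by rewrite ?Hy ?andbF.
  exists A => //; apply/setP => z; rewrite !inE; case: (z =P y) => [->|]; by rewrite ?(negbTE Hn) ?andbF.
Qed.

Lemma sauer n : forall D (R : {set T}) (F : {set {set T}}), #|R| = n ->
  (forall A, A \in F -> A \subset R) ->
  (forall S : {set T}, S \subset R -> #|S| = D.+1 -> ~~ shatters F S) -> #|F| <= n.+1 ^ D.
Proof.
elim: n => [|n IH] D R F HR HF HS.
  rewrite exp1n; apply/card_le1_eqP => A B HA HB.
  move/eqP: HR; rewrite cards_eq0 => /eqP HR; subst R.
  have := HF _ HA; have := HF _ HB; rewrite !subset0 => /eqP -> /eqP -> //.
case: D HS => [|D] HS; first by rewrite expn0; apply: sauer0 HF HS.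
have : 0 < #|R| by rewrite HR.
case/card_gt0P => x HxR.
set R' := R :\ x.
have HR' : #|R'| = n by move: HR; rewrite (cardsD1 x R) HxR add1n => [[]].
set P := [set A : {set T} | x \in A].
set Fa := F :\: P. set Fb := F :&: P.
set Fb' := [set A :\ x | A in Fb].
set F1 := Fa :|: Fb'. set F2 := Fa :&: Fb'.
have HFb : #|Fb'| = #|Fb|.
  apply: card_in_imset => A B; rewrite !inE => /andP [_ HA] /andP [_ HB] Heq.
  by rewrite -(setD1K HA) -(setD1K HB) Heq.
have HcF : #|F| = #|F1| + #|F2| by rewrite cardsUI HFb addnC cardsID.
have HF1 : forall C, C \in F1 -> exists2 A, A \in F & C = A \/ C = A :\ x.
  move=> C; rewrite inE => /orP [|/imsetP [A HA ->]].
    by rewrite inE => /andP [_ HC]; exists C => //; left.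
  by move: HA; rewrite inE => /andP [HA _]; exists A => //; right.
have HF1x : forall C, C \in F1 -> C \subset R'.
  move=> C; rewrite inE => /orP [|/imsetP [A HA ->]].
    rewrite !inE => /andP [HxC HC]; apply/subsetP => y Hy; rewrite !inE (subsetP (HF _ HC) _ Hy) andbT.
    by apply/eqP => Hyx; rewrite -Hyx Hy in HxC.
  move: HA; rewrite inE => /andP [HA _]; apply/subsetP => y; rewrite !inE => /andP [-> Hy].
  by rewrite (subsetP (HF _ HA) _ Hy).
have HR'R : R' \subset R by apply: subsetDl.
have B1 : #|F1| <= n.+1 ^ D.+1.
  apply: IH HR' HF1x _ => S HS' HSc; apply/negP => Hsh.
  have /negP := HS S (subset_trans HS' HR'R) HSc; apply.
  have HxS : x \notin S by apply/negP => H; have := subsetP HS' _ H; rewrite !inE eqxx.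
  apply/shattersP => Q HQ; move/shattersP: Hsh => Hsh; case: (Hsh Q HQ) => C HC HCQ.
  case: (HF1 _ HC) => A HA HCA; exists A => //; rewrite -HCQ.
  case: HCA => -> //; apply/setP => y; rewrite !inE; case: (y =P x) => [->|//].
  by rewrite (negbTE HxS) !andbF.
have B2 : #|F2| <= n.+1 ^ D.
  apply: IH HR' _ _ => [C HC|S HS' HSc]; first by apply: HF1x; rewrite inE; case/setIP: HC => ->.
  apply/negP => Hsh.
  have HxS : x \notin S by apply/negP => H; have := subsetP HS' _ H; rewrite !inE eqxx.
  have Hsub : x |: S \subset R.
    apply/subsetP => y; rewrite !inE => /orP [/eqP -> //|Hy].
    by have := subsetP HS' _ Hy; rewrite inE => /andP [].
  have Hsh2 : shatters F (x |: S).
    apply/shattersP => Q HQ.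
    have HQ' : Q :\ x \subset S.
      apply/subsetP => y; rewrite !inE => /andP [Hyx Hy].
      by have := subsetP HQ _ Hy; rewrite !inE (negbTE Hyx).
    move/shattersP: Hsh => Hsh; case: (Hsh _ HQ') => C HC HCQ.
    case/setIP: HC; rewrite !inE => /andP [HxC HCF] /imsetP [A]; rewrite !inE => /andP [HAF HxA] HCA.
    have HA : x |: C = A by rewrite HCA (setD1K HxA).
    have HQy : forall y, (y \in C) && (y \in S) = (y != x) && (y \in Q).
      by move=> y; have := congr1 (fun X : {set T} => y \in X) HCQ; rewrite !inE.
    case HxQ : (x \in Q).
      exists A => //; rewrite -HA; apply/setP => y; rewrite !inE.
      case: (y =P x) => [->|/eqP Hyx] /=; first by rewrite HxQ.
      by rewrite HQy Hyx.
    exists C => //; apply/setP => y; rewrite !inE.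
    case: (y =P x) => [->|/eqP Hyx] /=; first by rewrite HxQ (negbTE HxC).
    by rewrite HQy Hyx.
  have := HS (x |: S) Hsub; rewrite cardsU1 HxS HSc Hsh2 => /(_ erefl) //.
rewrite HcF; apply: leq_trans (leq_add B1 B2) _.
rewrite [in X in _ <= X]expnS [n.+1 ^ D.+1]expnS -[X in _ + X]mul1n -mulnDl addn1.
by rewrite leq_mul2l expn_mono ?orbT.
Qed.
End Sauer.


Lemma connect_ind (T : finType) (r : rel T) (P : T -> Prop) x :
  P x -> (forall a b, P a -> r a b -> P b) -> forall y, connect r x y -> P y.
Proof.
move=> Hx Hs y /connectP [p Hp ->]; elim: p x Hx Hp => [|z p IH] x Hx //=.
by case/andP => Hxz Hp; apply: IH Hp; apply: Hs Hxz.
Qed.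

Lemma card_bigcup_le (I T : finType) (Z : {set I}) (A : I -> {set T}) :
  #|\bigcup_(z in Z) A z| <= \sum_(z in Z) #|A z|.
Proof.
elim/big_rec2: _ => [|z n X _ H]; first by rewrite cards0. apply: leq_trans (leq_card_setU _ _).1 _; by rewrite leq_add2l.
Qed.

Lemma edges_lb (V : finType) (h : rel V) : symmetric h -> (forall a b, connect h a b) ->
  2 * (#|V| - 1) <= #|[set p : V * V | h p.1 p.2]|.
Proof.
move=> h_sym h_conn.
case: (posnP #|V|) => [->//|/card_gt0P [o _]].
pose par y := odflt o [pick p | h p y && ((dist h o p).+1 == dist h o y)].
have Hpar : forall y, y != o -> h (par y) y /\ (dist h o (par y)).+1 = dist h o y.
  move=> y Hy; rewrite /par; case: pickP => [p /andP [H1 /eqP H2] //|Hn].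
  exfalso; case Hd: (dist h o y) => [|n].
    by move/(dist0 h_conn): Hd => Hd; rewrite Hd eqxx in Hy.
  case: (dist_pred h_conn Hd) => p Hp Hpn.
  by have := Hn p; rewrite Hp Hpn Hd eqxx.
pose P1 := [set (y, par y) | y in [set~ o]].
pose P2 := [set (par y, y) | y in [set~ o]].
have C1 : #|P1| = #|V| - 1.
  rewrite card_in_imset ?cardsC1 ?subn1 // => y y' _ _ [] //.
have C2 : #|P2| = #|V| - 1.
  rewrite card_in_imset ?cardsC1 ?subn1 // => y y' _ _ [] //.
have D12 : P1 :&: P2 = set0.
  apply/setP => [[a b]]; rewrite !inE; apply/negP => /andP [/imsetP [y Hy [-> ->]] /imsetP [y' Hy' [E1 E2]]].
  move: Hy Hy'; rewrite !inE => Hy Hy'.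
  have [_ H1] := Hpar _ Hy; have [_ H2] := Hpar _ Hy'.
  move: H1 H2; rewrite -E1 E2; lia.
have Hsub : P1 :|: P2 \subset [set p : V * V | h p.1 p.2].
  apply/subsetP => [[a b]]; rewrite !inE => /orP [] /imsetP [y Hy [-> ->]] /=;
    move: Hy; rewrite !inE => Hy; have [H _] := Hpar _ Hy => //; by rewrite h_sym.
apply: leq_trans (subset_leq_card Hsub).
by have := cardsUI P1 P2; rewrite D12 cards0 addn0 C1 C2 => ->; rewrite mul2n addnn.
Qed.

Section Tree.
Variables (V : finType) (f : rel V).
Hypothesis f_sym : symmetric f.
Hypothesis f_irr : irreflexive f.
Hypothesis f_conn : forall a b, connect f a b.
Hypothesis f_cnt : #|[set p : V * V | f p.1 p.2]| = 2 * (#|V| - 1).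

Definition gr (u v : V) := fun a b => f a b && ~~ (((a == u) && (b == v)) || ((a == v) && (b == u))).

Lemma gr_sym u v : symmetric (gr u v).
Proof.
move=> a b; rewrite /gr f_sym; congr (_ && ~~ _).
by case: (a == u); case: (b == v); case: (a == v); case: (b == u).
Qed.

Lemma gr_swap u v : gr u v =2 gr v u.
Proof.
move=> a b; rewrite /gr; congr (_ && ~~ _); by rewrite orbC.
Qed.

Lemma gr_connect_sym u v a b : connect (gr u v) a b = connect (gr u v) b a.
Proof. by rewrite (sym_connect_sym (@gr_sym u v)). Qed.

Lemma gcover u v y : connect (gr u v) u y \/ connect (gr u v) v y.
Proof.
apply: (connect_ind (P := fun y => connect (gr u v) u y \/ connect (gr u v) v y)) (f_conn u y).
  by left.
move=> a b Ha Hab.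
case Hg : (gr u v a b).
  by case: Ha => H; [left|right]; apply: connect_trans H (connect1 Hg).
move: Hg; rewrite /gr Hab /= => /negbFE /orP [] /andP [_ /eqP ->]; by [right|left].
Qed.

Lemma bridge u v : f u v -> ~~ connect (gr u v) u v.
Proof.
move=> Huv; apply/negP => Hc.
have Hall : forall a, connect (gr u v) u a.
  move=> a; case: (gcover u v a) => // H; exact: connect_trans Hc H.
have Hconn : forall a b, connect (gr u v) a b.
  by move=> a b; apply: connect_trans (Hall b); rewrite gr_connect_sym.
have Hlb := edges_lb (@gr_sym u v) Hconn.
have Huv' : u != v by apply/eqP => E; rewrite E f_irr in Huv.
have Heq : [set p : V * V | f p.1 p.2] = (u, v) |: ((v, u) |: [set p : V * V | gr u v p.1 p.2]).
  apply/setP => [[a b]]; rewrite !inE /gr /= !xpair_eqE orbA.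
  have Hf : ((a == u) && (b == v)) || ((a == v) && (b == u)) -> f a b.
    by case/orP => /andP [/eqP -> /eqP ->] //; rewrite f_sym.
  move: Hf; case: (_ || _) => /=; last by rewrite andbT.
  by move=> ->.
have Hnot1 : (v, u) \notin [set p : V * V | gr u v p.1 p.2] by rewrite inE /gr /= !eqxx orbT andbF.
have Hnot2 : (u, v) \notin (v, u) |: [set p : V * V | gr u v p.1 p.2].
  by rewrite !inE /gr /= !eqxx !xpair_eqE /= (negbTE Huv') andbF.
move: f_cnt; rewrite Heq cardsU1 Hnot2 cardsU1 Hnot1 /= => Hc2.
by move: Hlb; rewrite -Hc2 !add1n => /ltnW; rewrite ltnn.
Qed.

Lemma bridge' u v : f u v -> ~~ connect (gr u v) v u.
Proof. by move=> H; rewrite gr_connect_sym; apply: bridge. Qed.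

Lemma side_split u v y : f u v -> connect (gr u v) u y -> y != u ->
  exists z, [/\ f u z, z != v & connect (gr u z) z y].
Proof.
move=> Huv Hc Hyu.
have : y = u \/ exists z, [/\ f u z, z != v & connect (gr u z) z y].
  apply: (connect_ind (P := fun y => y = u \/ exists z, [/\ f u z, z != v & connect (gr u z) z y])) Hc.
    by left.
  move=> a b [->|[z [Hz1 Hz2 Hz3]]] Hab.
    right; exists b; move: Hab; rewrite /gr eqxx /= => /andP [H1 H2]; split => //.
    by apply/eqP => E; rewrite E eqxx /= in H2.
  have [->|Hbu] := eqVneq b u; first by left.
  right; exists z; split => //; apply: (connect_trans Hz3 (connect1 _)).
  move: Hab; rewrite /gr => /andP [-> _] /=; rewrite (negbTE Hbu) !andbF orbF.
  apply/negP => /andP [/eqP E _]; subst a.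
  by have := bridge' Hz1; rewrite Hz3.
by case => [E|//]; rewrite E eqxx in Hyu.
Qed.

Lemma side_sub u v z y : f u v -> f u z -> z != v ->
  connect (gr u z) z y -> connect (gr u v) u y.
Proof.
move=> Huv Huz Hzv Hc.
have Huv' : u != v by apply/eqP => E; rewrite E f_irr in Huv.
have Hbr := bridge' Huz.
have : connect (gr u v) u y /\ connect (gr u z) z y.
  apply: (connect_ind (P := fun y => connect (gr u v) u y /\ connect (gr u z) z y)) Hc.
    split => //; apply: connect1; rewrite /gr Huz /= eqxx /= (negbTE Hzv) (negbTE Huv') //.
  move=> a b [Ha1 Ha2] Hab; have Hb2 : connect (gr u z) z b := connect_trans Ha2 (connect1 Hab).
  split => //; apply: (connect_trans Ha1 (connect1 _)).
  move: Hab; rewrite /gr => /andP [-> _] /=.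
  have Hau : a != u by apply/eqP => E; subst a; rewrite Ha2 in Hbr.
  have Hbu : b != u by apply/eqP => E; subst b; rewrite Hb2 in Hbr.
  by rewrite (negbTE Hau) (negbTE Hbu) !andbF.
by case.
Qed.

Lemma side_leaf u v y : #|[set w | f u w]| = 1 -> f u v -> connect (gr u v) u y -> y = u.
Proof.
move=> H1 Huv Hc.
have : #|[set w | f u w]| == 1 by rewrite H1.
case/cards1P => w Hw.
have Hvw : v = w by apply/set1P; rewrite -Hw inE.
apply: (connect_ind (P := fun y => y = u)) Hc => // a b -> Hab.
move: Hab; rewrite /gr eqxx /= => /andP [Hub H2].
have : b \in [set w | f u w] by rewrite inE.
by rewrite Hw -Hvw inE => /eqP E; rewrite E eqxx in H2.
Qed.


Variables (T : finType) (L : T -> V).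
Hypothesis L_inj : injective L.
Hypothesis leaves : forall v, (#|[set w | f v w]| == 1) = (v \in codom L).
Hypothesis deg3 : forall v, #|[set w | f v w]| <= 3.

Lemma part_card (S : {set T}) u v : f u v ->
  #|[set x in S | connect (gr u v) u (L x)]| + #|[set x in S | connect (gr v u) v (L x)]| = #|S|.
Proof.
move=> Huv.
have -> : [set x in S | connect (gr v u) v (L x)] = [set x in S | connect (gr u v) v (L x)].
  by apply/setP => x; rewrite !inE (eq_connect (gr_swap v u)).
rewrite -cardsUI.
have -> : [set x in S | connect (gr u v) u (L x)] :&: [set x in S | connect (gr u v) v (L x)] = set0.
  apply/setP => x; rewrite !inE; apply/negP => /andP [/andP [_ H1] /andP [_ H2]].
  have := bridge Huv; rewrite (connect_trans H1 _) //; by rewrite gr_connect_sym.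
rewrite cards0 addn0; apply: eq_card => x; rewrite !inE.
case: (x \in S) => //=; by case: (gcover u v (L x)) => ->; rewrite ?orbT.
Qed.

Lemma balance (S : {set T}) m : 3 * m + 3 <= #|S| -> exists u v, [/\ f u v,
  m < #|[set x in S | connect (gr u v) u (L x)]| & m < #|[set x in S | connect (gr v u) v (L x)]|].
Proof.
move=> HS.
pose W u v := #|[set x in S | connect (gr u v) u (L x)]|.
have [x0 Hx0] : exists x0, x0 \in S by apply/card_gt0P; apply: leq_trans HS; rewrite addn3.
have : #|[set w | f (L x0) w]| == 1 by rewrite leaves codom_f.
case/cards1P => z0 Hz0.
have Hf0 : f (L x0) z0.
  have : z0 \in [set w | f (L x0) w] by rewrite Hz0 set11.
  by rewrite inE.
pose E' := [set p : V * V | f p.1 p.2 && (m < W p.1 p.2)].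
have [p0 Hp0] : exists p0, p0 \in E'.
  have := part_card S Hf0; rewrite -/(W _ _) -/(W _ _) => Hsum.
  case: (ltnP m (W (L x0) z0)) => H.
    by exists (L x0, z0); rewrite inE /= Hf0 H.
  exists (z0, L x0); rewrite inE /= f_sym Hf0 /=; move: HS; rewrite -Hsum; lia.
pose sz (p : V * V) := #|[set y | connect (gr p.1 p.2) p.1 y]|.
case: (arg_minnP sz Hp0) => [[u v]] Hin Hmin.
have : (u, v) \in E' by []. rewrite inE /= => /andP [Huv Hmuv].
case: (ltnP m (W v u)) => Hvu; first by exists u, v.
have Hsum := part_card S Huv; rewrite -/(W _ _) -/(W _ _) in Hsum.
have HWuv : 2 * m + 3 <= W u v by move: HS; rewrite -Hsum; lia.
have Hnl : #|[set w | f u w]| != 1.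
  apply/negP => /eqP H1.
  have : W u v <= 1.
    apply/card_le1_eqP => x x'; rewrite !inE => /andP [_ Hx] /andP [_ Hx'].
    by apply: L_inj; rewrite (side_leaf H1 Huv Hx) (side_leaf H1 Huv Hx').
  move: HWuv; lia.
have HLu : forall x, L x != u.
  move=> x; apply/eqP => E; move: Hnl; rewrite leaves -E codom_f //.
pose Z := [set w | f u w] :\ v.
have HZ : #|Z| <= 2.
  have := deg3 u; rewrite (cardsD1 v) inE Huv -/Z; lia.
have Hcov : [set x in S | connect (gr u v) u (L x)] \subset \bigcup_(z in Z) [set x in S | connect (gr z u) z (L x)].
  apply/subsetP => x; rewrite inE => /andP [HxS Hx].
  case: (side_split Huv Hx (HLu x)) => z [Hz1 Hz2 Hz3].
  apply/bigcupP; exists z; first by rewrite !inE Hz2 Hz1.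
  by rewrite inE HxS /= (eq_connect (gr_swap z u)).
have [z Hz HWz] : exists2 z, z \in Z & m < W z u.
  apply/exists_inP; apply/negP => /exists_inP Hn.
  have Hle : forall z, z \in Z -> W z u <= m.
    by move=> z Hz; rewrite leqNgt; apply/negP => H; apply: Hn; exists z.
  have := leq_trans (subset_leq_card Hcov) (card_bigcup_le _ _).
  have : \sum_(z in Z) #|[set x in S | connect (gr z u) z (L x)]| <= \sum_(z in Z) m.
    by apply: leq_sum => z' Hz'; apply: Hle.
  rewrite sum_nat_const -/(W u v) => H1 H2.
  have := leq_trans H2 H1; have := leq_mul HZ (leqnn m); move: HWuv; lia.
move: Hz; rewrite !inE => /andP [Hzv Huz].
have Hzu : f z u by rewrite f_sym.
have Hzin : (z, u) \in E' by rewrite inE /= Hzu HWz.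
have := Hmin (z, u) Hzin; rewrite /sz /= => Hle.
have Hpr : [set y | connect (gr z u) z y] \proper [set y | connect (gr u v) u y].
  apply/properP; split.
    apply/subsetP => y; rewrite !inE => Hy.
    by apply: (side_sub Huv Huz Hzv); rewrite (eq_connect (gr_swap u z)).
  exists u; first by rewrite inE connect0.
  by rewrite inE; apply: bridge.
by have := proper_card Hpr; rewrite ltnNge Hle.
Qed.

End Tree.


Section Minor.
Variable T : finType.
Variable e : rel T.
Hypothesis e_sym : symmetric e.
Hypothesis conn : forall x y, connect e x y.

Let d0 := dist0 conn.
Let dtri := dist_tri conn.
Let dpred := dist_pred conn.
Let dsym := dist_sym e_sym conn.
Let dsucc := dist_succ e_sym conn.

Definition erest (S : {set T}) := fun a b => [&& e a b, a \in S & b \in S].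

Lemma erest_sym S : symmetric (erest S).
Proof. by move=> a b; rewrite /erest e_sym; case: (a \in S); case: (b \in S); rewrite ?andbF ?andbT. Qed.

Variable t : nat.
Variable s : 'I_t -> T.
Hypothesis s_inj : injective s.

Definition key (i : 'I_t) u := dist e (s i) u * t + i.
Definition cell (i : 'I_t) := [set u | [forall i', key i u <= key i' u]].

Lemma key_inj i i' u : key i u = key i' u -> i = i'.
Proof.
rewrite /key => H; apply: val_inj => /=.
have Hi := ltn_ord i; have Hi' := ltn_ord i'.
by have := congr1 (modn^~ t) H; rewrite /= !modnMDl !modn_small.
Qed.

Lemma key_lt i i' u : dist e (s i) u < dist e (s i') u -> key i u < key i' u.
Proof.
rewrite /key => H; have Hi := ltn_ord i.
have : (dist e (s i) u).+1 * t <= dist e (s i') u * t by rewrite leq_mul2r H orbT.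
nia.
Qed.

Lemma key_le i i' u : key i u <= key i' u -> dist e (s i) u <= dist e (s i') u.
Proof. by move=> H; rewrite leqNgt; apply/negP => /key_lt; rewrite ltnNge H. Qed.

Lemma cell_disj i i' u : u \in cell i -> u \in cell i' -> i = i'.
Proof.
rewrite !inE => /forallP /(_ i') H1 /forallP /(_ i) H2.
by apply: (@key_inj _ _ u); apply/eqP; rewrite eqn_leq H1 H2.
Qed.

Lemma cell_ex (i0 : 'I_t) u : exists i, u \in cell i.
Proof.
case: (@arg_minnP _ i0 predT (fun i => key i u) isT) => i _ H.
by exists i; rewrite inE; apply/forallP => i'; apply: H.
Qed.

Lemma s_cell i : s i \in cell i.
Proof.
rewrite inE; apply/forallP => i'; rewrite /key dist_xx mul0n add0n.
have [->|Hne] := eqVneq i' i; first by rewrite dist_xx.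
have : dist e (s i') (s i) != 0.
  by apply/eqP => /d0 /s_inj H; rewrite H eqxx in Hne.
have := ltn_ord i; nia.
Qed.

Lemma cell_conn i u : u \in cell i -> connect (erest (cell i)) (s i) u.
Proof.
move Hn : (dist e (s i) u) => n.
elim: n u Hn => [|n IH] u Hn Hu.
  by move/(d0): Hn => ->.
case: (dpred Hn) => p Hpu Hp.
have Hpc : p \in cell i.
  rewrite inE; apply/forallP => i'; move: Hu; rewrite inE => /forallP /(_ i').
  rewrite /key Hn Hp.
  have H1 := dtri (s i') p u.
  have H2 := dist_edge Hpu.
  have : dist e (s i') u * t <= (dist e (s i') p).+1 * t.
    by rewrite leq_mul2r; apply/orP; right; apply: leq_trans H1 _; rewrite -addn1 leq_add2l.
  nia.
apply: connect_trans (IH _ Hp Hpc) (connect1 _).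
by rewrite /erest Hpu Hpc Hu.
Qed.

Lemma cell_connected i : connected_in e (cell i).
Proof.
move=> x y Hx Hy.
have Hs := sym_connect_sym (erest_sym (cell i)).
apply: connect_trans (cell_conn Hy).
by rewrite Hs; apply: cell_conn.
Qed.


Section Geo.
Variable j : nat.
Variables (a b : 'I_t) (c : T).
Hypothesis Ha : dist e (s a) c <= j.
Hypothesis Hb : dist e (s b) c <= j.
Hypothesis Ho : forall m, m != a -> m != b -> j < dist e (s m) c.
Hypothesis Hab : a != b.

Lemma geo_cell w : dist e c w + dist e w (s a) = dist e c (s a) -> w \in cell a :|: cell b.
Proof.
move=> Hw; case: (cell_ex a w) => m Hm.
have [E | Hma] := eqVneq m a; first by rewrite in_setU -E Hm.
have [E | Hmb] := eqVneq m b; first by rewrite in_setU -E Hm orbT.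
have H1 := Ho Hma Hmb.
have H2 := dtri (s m) w c.
have H3 : dist e (s a) w < dist e (s m) w.
  move: Ha H1 H2 Hw; rewrite (dsym w c) (dsym w (s a)) (dsym c (s a)); lia.
have := key_lt H3; move: Hm; rewrite inE => /forallP /(_ a) H4.
by rewrite ltnNge H4.
Qed.

Lemma geo_walk n w : dist e w (s a) = n -> dist e c w + n = dist e c (s a) ->
  w \in cell b -> exists x y, [/\ x \in cell a, y \in cell b & e x y].
Proof.
elim: n w => [|n IH] w Hn Hg Hw.
  move/d0: Hn => Hn; move: Hw; rewrite Hn => /(cell_disj (s_cell a)) Hab'.
  by move: Hab; rewrite Hab' eqxx.
have Hne : w != s a by apply/eqP => Heq; rewrite Heq dist_xx in Hn.
case: (dsucc Hne) => w' Hww' Hd; rewrite Hn in Hd; case: Hd => Hd.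
have Hg' : dist e c w' + n = dist e c (s a).
  have H1 := dtri c w w'.
  have H2 := dist_edge Hww'.
  have H3 := dtri c w' (s a).
  move: H1 H2 H3 Hg; rewrite Hd; lia.
have := geo_cell; rewrite -Hd in Hg'; move/(_ _ Hg'); rewrite in_setU => /orP [Hw'|Hw'].
  by exists w', w; split => //; rewrite e_sym.
by apply: (IH w') => //; rewrite -Hd.
Qed.
End Geo.

End Minor.

Lemma minor_of_pairs (T : finType) (e : rel T) (e_sym : symmetric e)
  (conn : forall x y, connect e x y) (S : {set T}) j : 0 < #|S| ->
  (forall x y, x \in S -> y \in S -> x != y -> exists c, [/\ dist e x c <= j, dist e y c <= j &
     forall z, z \in S -> z != x -> z != y -> j < dist e z c]) -> has_clique_minor e #|S|.
Proof.
move=> Ht HP; case/card_gt0P: (Ht) => x0 Hx0.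
pose s := fun i : 'I_#|S| => nth x0 (enum S) i.
have Hsz : size (enum S) = #|S| by rewrite cardE.
have s_inj : injective s.
  move=> i i' /eqP; rewrite /s nth_uniq ?Hsz ?enum_uniq // => /eqP; apply: val_inj.
have s_in : forall i, s i \in S by move=> i; rewrite /s -mem_enum mem_nth ?Hsz.
exists (cell e s); split.
- by move=> i; apply/set0Pn; exists (s i); apply: s_cell.
- by move=> i; apply: cell_connected.
- move=> i i' Hii; rewrite -setI_eq0; apply/eqP/setP => u; rewrite !inE.
  apply/negP => /andP [H1 H2].
  have H1' : u \in cell e s i by rewrite inE.
  have H2' : u \in cell e s i' by rewrite inE.
  by have := cell_disj H1' H2' => Heq; rewrite Heq eqxx in Hii.
- move=> i i' Hii.
  have Hne : s i != s i' by apply: contra Hii => /eqP /s_inj ->.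
  case: (HP _ _ (s_in i) (s_in i') Hne) => c [Ha Hb Ho].
  have Ho' : forall m, m != i -> m != i' -> j < dist e (s m) c.
    move=> m Hm1 Hm2; apply: Ho (s_in m) _ _.
      by apply: contra Hm1 => /eqP /s_inj ->.
    by apply: contra Hm2 => /eqP /s_inj ->.
  have Hc := geo_cell e_sym conn Ha Hb Ho' Hii (w := c).
  rewrite dist_xx add0n in Hc; move: (Hc erefl); rewrite in_setU => /orP [Hci|Hci'].
    have Ho'' : forall m, m != i' -> m != i -> j < dist e (s m) c by move=> m H1 H2; apply: Ho'.
    have Hii' : i' != i by rewrite eq_sym.
    have E1 : dist e c (s i') = dist e c (s i') by [].
    have E2 : dist e c c + dist e c (s i') = dist e c (s i') by rewrite dist_xx.
    case: (geo_walk e_sym conn s_inj Hb Ha Ho'' Hii' E1 E2 Hci) => x [y [H1 H2 H3]].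
    by exists y, x; split => //; rewrite e_sym.
  have E1 : dist e c (s i) = dist e c (s i) by [].
  have E2 : dist e c c + dist e c (s i) = dist e c (s i) by rewrite dist_xx.
  exact: (geo_walk e_sym conn s_inj Ha Hb Ho' Hii E1 E2 Hci').
Qed.


Section Rank.
Variable T : finType.
Variable e : rel T.

Definition ntype (X : {set T}) (p : T) := [set y | (y \notin X) && e p y].

Lemma types_card (X : {set T}) : #|[set ntype X p | p in X]| <= 2 ^ cutrank e X.
Proof.
rewrite /cutrank.
set M := (\matrix_(i < #|T|, j < #|T|) _)%R.
pose Phi (w : 'rV['F_2]_#|T|) := [set y | w ord0 (enum_rank y) == 1%R].
have Hsub : [set ntype X p | p in X] \subset [set Phi (D *m row_base M)%R | D in [set: 'rV['F_2]_(\rank M)]].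
  apply/subsetP => tau /imsetP [p Hp ->].
  have : (row (enum_rank p) M <= row_base M)%MS by rewrite eq_row_base row_sub.
  case/submxP => D HD; apply/imsetP; exists D; first by rewrite inE.
  rewrite -HD /Phi; apply/setP => y; rewrite !inE mxE !mxE !enum_rankK Hp /=.
  by case: (_ && _).
apply: leq_trans (subset_leq_card Hsub) _.
apply: leq_trans (leq_imset_card _ _) _.
by rewrite cardsT card_mx card_Fp // mul1n.
Qed.

End Rank.

Section Good.
Variable T : finType.
Variable e : rel T.
Hypothesis e_sym : symmetric e.
Hypothesis conn : forall x y, connect e x y.
Let dtri := dist_tri conn.
Let dsucc := dist_succ e_sym conn.

Lemma cross_path (X : {set T}) a c : a \in X -> c \notin X ->
  exists p q, [/\ p \in X, q \notin X, e p q & dist e a c = dist e a p + 1 + dist e q c].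
Proof.
move=> Ha Hc.
suff H : forall n w, dist e w c = n -> w \in X -> dist e a w + dist e w c = dist e a c ->
  exists p q, [/\ p \in X, q \notin X, e p q & dist e a c = dist e a p + 1 + dist e q c].
  by apply: (H _ a erefl Ha); rewrite dist_xx.
elim=> [|n IH] w Hn Hw Hg.
  by move/(dist0 conn): Hn => E; rewrite -E Hw in Hc.
have Hne : w != c by apply/eqP => E; rewrite -E Hw in Hc.
case: (dsucc Hne) => w' Hww' Hd.
case Hw' : (w' \in X).
  apply: (IH w') => //; first by move: Hd; rewrite Hn => [[]].
  have H1 := dtri a w w'; have H2 := dist_edge Hww'; have H3 := dtri a w' c.
  move: H1 H2 H3 Hg; rewrite -Hd; lia.
exists w, w'; split => //; first by rewrite Hw'.
by rewrite -Hg -Hd addn1 addnS.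
Qed.

Lemma good_elem (X : {set T}) r (A : {set T}) : cutrank e X <= r -> A \subset X -> 2 ^ r < #|A| ->
  exists2 a, a \in A & forall c, c \notin X ->
     exists2 a', a' \in A & (a' != a) && (dist e a' c <= dist e a c).
Proof.
move=> Hr HAX HA.
pose tau := ntype e X.
pose Types := [set tau p | p in X].
pose SA a t0 := [exists p in X, (tau p == t0) && [forall a' in A, (a' != a) ==>
     [forall p' in X, (tau p' == t0) ==> (dist e a p < dist e a' p')]]].
pose Bd := [set a in A | [exists t0 in Types, SA a t0]].
pose h a := odflt set0 [pick t0 in Types | SA a t0].
have Hh : forall a, a \in Bd -> h a \in Types /\ SA a (h a).
  move=> a; rewrite inE => /andP [_ /exists_inP [t0 Ht0 HSA]].
  rewrite /h; case: pickP => [t1 /andP [H1 H2] //|Hn].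
  by have := Hn t0; rewrite Ht0 HSA.
have Huniq : forall a a' t0, a \in A -> a' \in A -> SA a t0 -> SA a' t0 -> a = a'.
  move=> a a' t0 Ha Ha' /exists_inP [p Hp /andP [/eqP Hpt H1]] /exists_inP [p' Hp' /andP [/eqP Hpt' H2]].
  apply/eqP/negPn/negP => Hne.
  have Hne' : a' != a by rewrite eq_sym.
  move/forall_inP: H1 => /(_ a' Ha'); rewrite Hne' /= => /forall_inP /(_ p' Hp').
  rewrite Hpt' eqxx /= => Hlt1.
  move/forall_inP: H2 => /(_ a Ha); rewrite Hne /= => /forall_inP /(_ p Hp).
  rewrite Hpt eqxx /= => Hlt2.
  by move: Hlt1 Hlt2; lia.
have HBd : #|Bd| <= 2 ^ r.
  have -> : #|Bd| = #|h @: Bd|.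
    apply/esym/card_in_imset => a a' Ha Ha' Heq.
    have [_ H1] := Hh _ Ha; have [_ H2] := Hh _ Ha'.
    move: Ha Ha'; rewrite !inE => /andP [Ha _] /andP [Ha' _].
    by rewrite -Heq in H2; apply: Huniq Ha Ha' H1 H2.
  have : h @: Bd \subset Types.
    by apply/subsetP => t0 /imsetP [a Ha ->]; case: (Hh _ Ha).
  move/subset_leq_card => H1; apply: leq_trans H1 _.
  apply: leq_trans (types_card e X) _.
  by rewrite leq_exp2l.
have [a Ha HaBd] : exists2 a, a \in A & a \notin Bd.
  apply/exists_inP; apply/negP => /exists_inP Hn.
  have : A \subset Bd.
    apply/subsetP => a Ha; apply/negPn/negP => Hb; apply: Hn; by exists a.
  move/subset_leq_card => H1; move: (leq_trans H1 HBd); rewrite leqNgt HA //.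
exists a => // c Hc.
case: (cross_path (subsetP HAX _ Ha) Hc) => p [q [Hp Hq Hpq Hdist]].
have HnSA : ~~ SA a (tau p).
  apply/negP => HS; move: HaBd; rewrite inE Ha /=; apply/negP/negPn.
  by apply/exists_inP; exists (tau p) => //; apply/imsetP; exists p.
have : ~~ ((tau p == tau p) && [forall a' in A, (a' != a) ==>
     [forall p' in X, (tau p' == tau p) ==> (dist e a p < dist e a' p')]]).
  by apply: contra HnSA => H; apply/exists_inP; exists p.
rewrite eqxx /= => /forall_inPn [a' Ha' /=]; rewrite negb_imply => /andP [Ha'a /forall_inPn [p' Hp' /=]].
rewrite negb_imply => /andP [/eqP Htau]; rewrite -leqNgt => Hle.
exists a' => //; rewrite Ha'a /=.
have Hp'q : e p' q.
  have : q \in tau p by rewrite /tau /ntype inE Hq Hpq.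
  by rewrite -Htau /tau /ntype inE => /andP [].
have H1 := dtri a' p' c; have H2 := dtri p' q c; have H3 := dist_edge Hp'q.
move: H1 H2 H3 Hle; rewrite Hdist; lia.
Qed.

End Good.


Lemma foldr_mul_le (s : seq nat) N : all (fun x => x <= N) s -> foldr muln 1 s <= N ^ size s.
Proof.
elim: s => [|x s IH] //= /andP [Hx Hs]; rewrite expnS; exact: leq_mul Hx (IH Hs).
Qed.

Section Main.
Variable T : finType.
Variable e : rel T.
Hypothesis e_sym : symmetric e.
Hypothesis conn : forall x y, connect e x y.
Variable d : nat.
Hypothesis dist_d : forall x y, dist e x y <= d.
Variable R : {set T}.
Hypothesis R_res : resolving e R.

Definition trace j v := [set x in R | dist e x v <= j].
Definition Fam j := [set trace j v | v in T].

Lemma count_bound D : (forall j (S : {set T}), S \subset R -> #|S| = D.+1 -> ~~ shatters (Fam j) S) ->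
  #|T| <= (#|R|.+1) ^ (d * D).
Proof.
move=> HS.
have HF : forall j, #|Fam j| <= #|R|.+1 ^ D.
  move=> j; apply: (@sauer _ #|R| D R (Fam j) erefl _ (HS j)) => A /imsetP [v _ ->].
  by apply/subsetP => x; rewrite inE => /andP [].
pose phi v : {ffun 'I_d -> {set T}} := [ffun j : 'I_d => trace j v].
have phi_inj : injective phi.
  move=> u v Huv; apply/eqP/negPn/negP => Hne.
  case: (R_res Hne) => x HxR Hd.
  have Htr : forall j : 'I_d, trace j u = trace j v.
    by move=> j; have := congr1 (fun g : {ffun 'I_d -> {set T}} => g j) Huv; rewrite /phi !ffunE.
  have Hx : forall a b, dist e x a < dist e x b -> (forall j : 'I_d, trace j a = trace j b) -> False.
    move=> a b Hab Htr'.
    have Hj : dist e x a < d by apply: leq_trans Hab (dist_d _ _).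
    have := congr1 (fun X : {set T} => x \in X) (Htr' (Ordinal Hj)); rewrite /trace !inE /= HxR leqnn /=.
    by rewrite leqNgt Hab.
  case: (ltngtP (dist e x u) (dist e x v)) => H.
  - exact: Hx H Htr.
  - by apply: Hx H _ => j; rewrite Htr.
  - by rewrite H eqxx in Hd.
have -> : #|T| = #|phi @: T| by rewrite card_imset.
have Hsub : phi @: T \subset [set g | g \in family (fun j : 'I_d => mem (Fam j))].
  apply/subsetP => g /imsetP [v _ ->]; rewrite inE; apply/familyP => j.
  by rewrite /phi ffunE; apply/imsetP; exists v.
apply: leq_trans (subset_leq_card Hsub) _.
have -> : #|[set g | g \in family (fun j : 'I_d => mem (Fam j))]| =
          #|family (fun j : 'I_d => mem (Fam j))| by apply: eq_card => g; rewrite inE.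
rewrite card_family.
apply: leq_trans (foldr_mul_le (N := #|R|.+1 ^ D) _) _.
  by apply/allP => n /mapP [j _ ->]; apply: HF.
by rewrite size_map size_enum_ord -expnM mulnC.
Qed.

Lemma shat_pairs j (S : {set T}) : S \subset R -> shatters (Fam j) S ->
  forall x y, x \in S -> y \in S -> x != y -> exists c, [/\ dist e x c <= j, dist e y c <= j &
     forall z, z \in S -> z != x -> z != y -> j < dist e z c].
Proof.
move=> HSR /shattersP Hsh x y Hx Hy Hxy.
have HQ : [set x; y] \subset S by apply/subsetP => z; rewrite !inE => /orP [] /eqP ->.
case: (Hsh _ HQ) => A /imsetP [c _ ->] HA.
have Hm : forall z, z \in S -> (z \in trace j c) = (z \in [set x; y]).
  by move=> z Hz; have := congr1 (fun X : {set T} => z \in X) HA; rewrite !inE Hz andbT.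
exists c; split.
- by have := Hm x Hx; rewrite !inE eqxx /= => /andP [].
- by have := Hm y Hy; rewrite !inE eqxx orbT /= => /andP [].
- move=> z Hz Hzx Hzy; have := Hm z Hz; rewrite !inE (negbTE Hzx) (negbTE Hzy) /=.
  by rewrite (subsetP HSR _ Hz) /= ltnNge => ->.
Qed.

End Main.

Unset Implicit Arguments. Set Strict Implicit. Set Printing Implicit Defensive.


Theorem corollary3 (T : finType) (e : rel T) (e_sym : symmetric e)
  (e_irr : irreflexive e) (d k : nat) (Hd : has_diameter e d)
  (Hk : exists R : {set T}, resolving e R /\ #|R| = k) :
  (forall t : nat, ~ has_clique_minor e t ->
     #|T| <= (d * k + 1) ^ (d * (t - 1)) + 1) /\
  (forall r : nat, rankwidth_le e r ->
     #|T| <= (d * k + 1) ^ (d * (3 * 2 ^ r + 2)) + 1).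
Proof.
case: Hd => conn [dist_d _]; case: Hk => R [HR HRk].
have bound_fin : forall D, (forall j (S : {set T}), S \subset R -> #|S| = D.+1 -> ~~ shatters (Fam e R j) S) ->
    #|T| <= (d * k + 1) ^ (d * D) + 1.
  move=> D HS; have := count_bound dist_d HR HS; rewrite HRk => H.
  apply: leq_trans H _; apply: leq_trans (leq_addr 1 _).
  case: (posnP d) => [->|Hd]; first by rewrite !mul0n !expn0.
  by apply: expn_mono; rewrite addn1 ltnS leq_pmull.
split.
  case=> [|t] Hnot.
    exfalso; apply: Hnot; exists (fun _ => set0); split; by case.
  rewrite subn1 /=; apply: bound_fin => j S HSR HSc; apply/negP => Hsh; apply: Hnot.
  rewrite -HSc; apply: (minor_of_pairs e_sym conn (j := j)); first by rewrite HSc.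
  exact: shat_pairs HSR Hsh.
move=> r [Hle1|[V [f [L [[f_sym f_irr] [f_conn f_cnt] deg3 [L_inj leaves] Hcut]]]]].
  by apply: (leq_trans Hle1); rewrite leq_addl.
apply: bound_fin => j S HSR HSc; apply/negP => Hsh.
have P := shat_pairs HSR Hsh.
have HS3 : 3 * 2 ^ r + 3 <= #|S| by rewrite HSc; lia.
case: (balance f_sym f_irr f_conn f_cnt L_inj leaves deg3 HS3) => u [v [Huv H1 H2]].
pose X := [set x | connect (gr f u v) u (L x)].
have HX : cutrank e X <= r := Hcut u v Huv.
have HXc : ~: X = [set x | connect (gr f v u) v (L x)].
  apply/setP => x; rewrite !inE (eq_connect (gr_swap f v u)).
  case: (gcover f_conn u v (L x)) => H.
    rewrite H /=; apply/esym/negP => H'.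
    by have := bridge f_sym f_irr f_conn f_cnt Huv; rewrite (connect_trans H _) // gr_connect_sym.
  rewrite H; apply/negP => H'.
  by have := bridge f_sym f_irr f_conn f_cnt Huv; rewrite (connect_trans H' _) // gr_connect_sym.
have HY : cutrank e (~: X) <= r by rewrite HXc; apply: Hcut; rewrite f_sym.
have HA1 : [set x in S | connect (gr f u v) u (L x)] \subset X.
  by apply/subsetP => x; rewrite !inE => /andP [].
have HA2 : [set x in S | connect (gr f v u) v (L x)] \subset ~: X.
  by rewrite HXc; apply/subsetP => x; rewrite !inE => /andP [].
case: (good_elem e_sym conn HX HA1 H1) => a Ha Hga.
case: (good_elem e_sym conn HY HA2 H2) => b Hb Hgb.
have HaX : a \in X := subsetP HA1 _ Ha.
have HbX : b \notin X by have := subsetP HA2 _ Hb; rewrite inE.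
have HaS : a \in S by move: Ha; rewrite inE => /andP [].
have HbS : b \in S by move: Hb; rewrite inE => /andP [].
have Hab : a != b by apply/eqP => E; move: HbX; rewrite -E HaX.
case: (P _ _ HaS HbS Hab) => c [Hac Hbc Hoth].
case HcX : (c \in X).
  have : c \notin ~: X by rewrite inE HcX.
  case/Hgb => b' Hb' /andP [Hb'b Hle].
  have Hb'X : b' \notin X by have := subsetP HA2 _ Hb'; rewrite inE.
  have Hb'a : b' != a by apply/eqP => E; rewrite E HaX in Hb'X.
  have Hb'S : b' \in S by move: Hb'; rewrite inE => /andP [].
  have := Hoth _ Hb'S Hb'a Hb'b; rewrite ltnNge (leq_trans Hle Hbc) //.
have : c \notin X by rewrite HcX.
case/Hga => a' Ha' /andP [Ha'a Hle].
have Ha'X : a' \in X := subsetP HA1 _ Ha'.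
have Ha'b : a' != b by apply/eqP => E; move: HbX; rewrite -E Ha'X.
have Ha'S : a' \in S by move: Ha'; rewrite inE => /andP [].
have := Hoth _ Ha'S Ha'a Ha'b; rewrite ltnNge (leq_trans Hle Hac) //.
Qed.
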